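(* Let $R$ be a ring and $I,J$ ideals of $R$ with $I\cap J=0$. Then $[I]\cap[J]\subseteq\mathrm{Nil}_2(R)$.
   Context: Rings are commutative with unit. $\widehat\Theta(R)$ is the free monoid on $\mathrm{Der}(R)$, acting on $R$ by composition of derivations. For an ideal $I$, $[I]:=\sum_{\theta\in\widehat\Theta(R)}\theta(I)$, the smallest ideal containing $I$ stable under all derivations of $R$. $\mathrm{Nil}_2(R):=\{x\in R: x^2=0\}$. *)

(* Defs.v *)
From HB Require Import structures.
From mathcomp Require Import all_boot all_order all_algebra.
Set Implicit Arguments. Unset Strict Implicit. Unset Printing Implicit Defensive.
Import GRing.Theory.
Local Open Scope ring_scope.

(* Rings are commutative with unit (the zero ring allowed). *)

Definition is_ideal (R : comPzRingType) (I : R -> Prop) : Prop :=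
  I 0 /\ (forall x y, I x -> I y -> I (x + y)) /\ (forall r x, I x -> I (r * x)).

Definition is_der (R : comPzRingType) (D : R -> R) : Prop :=
  (forall x y, D (x + y) = D x + D y) /\ (forall x y, D (x * y) = x * D y + D x * y).

(* Action of a word theta = [D1; ...; Dk] of the free monoid on Der(R):
   theta(x) = D1 (D2 (... (Dk x))); the empty word acts as the identity. *)
Definition word_act (R : comPzRingType) (theta : seq (R -> R)) (x : R) : R :=
  foldr (fun D y => D y) x theta.

Fixpoint is_der_word (R : comPzRingType) (theta : seq (R -> R)) : Prop :=
  if theta is D :: theta' then is_der D /\ is_der_word theta' else True.

(* [I] := sum over theta in the free monoid on Der(R) of theta(I):
   the set of finite sums of elements theta(x), theta a word of derivations, x in I. *)
Inductive bracket (R : comPzRingType) (I : R -> Prop) : R -> Prop :=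
| bracket0 : bracket I 0
| bracketS : forall theta x y, is_der_word theta -> I x -> bracket I y ->
    bracket I (word_act theta x + y).

Definition Nil2 (R : comPzRingType) (x : R) : Prop := x ^+ 2 = 0.

(* Main.v *)
Require Import Defs.
From mathcomp Require Import all_boot all_order all_algebra.
Local Open Scope ring_scope.
Import GRing.Theory.

Lemma der0 (R : comPzRingType) (D : R -> R) : is_der D -> D 0 = 0.
Proof.
move=> [Hadd _]; have h := Hadd 0 0; rewrite addr0 in h.
have : D 0 + D 0 - D 0 = D 0 - D 0 by rewrite -h.
by rewrite addrK subrr.
Qed.

Lemma move_side (R : comPzRingType) (I : R -> Prop) (a b : R) (n : nat) :
  is_ideal I -> I a ->
  (forall th ph, (size th + size ph < n)%N -> is_der_word th -> is_der_word ph ->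
     word_act th a * word_act ph b = 0) ->
  forall th ph, (size th + size ph = n)%N -> is_der_word th -> is_der_word ph ->
     I (word_act th a * word_act ph b).
Proof.
move=> [I0 [IA IM]] Ia H th; elim: th => [|D th IH] ph Hs Hth Hph /=.
  by rewrite mulrC; apply: IM.
case: Hth => HD Hth.
have E : D (word_act th a) * word_act ph b =
   D (word_act th a * word_act ph b) - word_act th a * D (word_act ph b).
  by case: HD => _ ->; rewrite addrC addKr.
rewrite E H ?der0 //; last by rewrite -Hs /= addSn.
rewrite sub0r -mulN1r; apply: IM.
have -> : word_act th a * D (word_act ph b) = word_act th a * word_act (D :: ph) b by [].
apply: IH => //; by rewrite /= addnS.
Qed.

Lemma words_zero (R : comPzRingType) (I J : R -> Prop) :
  is_ideal I -> is_ideal J -> (forall x, I x -> J x -> x = 0) ->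
  forall a b, I a -> J b -> forall n th ph, (size th + size ph < n)%N ->
  is_der_word th -> is_der_word ph -> word_act th a * word_act ph b = 0.
Proof.
move=> HI HJ HIJ a b Ia Jb n; elim: n => [|n IH] th ph Hs Hth Hph //.
have [Hlt|Heq] : (size th + size ph < n)%N \/ (size th + size ph = n)%N.
  by move: Hs; rewrite ltnS leq_eqVlt => /orP [/eqP|]; auto.
  exact: IH.
apply: HIJ.
  exact: (move_side _ _ _ _ _ HI Ia IH _ _ Heq Hth Hph).
rewrite mulrC; apply: (move_side _ _ _ _ _ HJ Jb _ ph th) => //.
- move=> th2 ph2 Hs2 Ht2 Hp2; rewrite mulrC; apply: IH => //.
  by rewrite -Heq addnC (addnC (size th)).
all: by rewrite addnC.
Qed.

Theorem corollaryA16 (R : comPzRingType) (I J : R -> Prop) :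
  is_ideal I -> is_ideal J -> (forall x, I x -> J x -> x = 0) ->
  forall x, bracket I x -> bracket J x -> Nil2 x.
Proof.
move=> HI HJ HIJ x Bx Bx'; rewrite /Nil2 expr2.
have key : forall u v, bracket I u -> bracket J v -> u * v = 0.
  move=> u v Bu; elim: Bu v => [|th a u' Hth Ia _ IHu] v Bv; first by rewrite mul0r.
  rewrite mulrDl IHu // addr0.
  elim: Bv => [|ph b v' Hph Jb _ IHv]; first by rewrite mulr0.
  rewrite mulrDr IHv addr0.
  exact: (words_zero _ _ _ HI HJ HIJ _ _ Ia Jb _ _ _ (ltnSn _) Hth Hph).
exact: key.
Qed.
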